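(* Let $C$ be an ordinary non-singular plane quartic defined over $k$, let $\gamma\in\Gamma$, $Q\in\mathcal{D}_\gamma$, and let $\phi:C\to C_Q$ be an isomorphism with $\sigma\phi\circ\phi^{-1}=\gamma$. Let $\mathcal{B}$ be the set of bitangents of $C$. Then $\mathrm{Aut}_k(\mathcal{B})=\phi^{-1}\circ\Gamma_\gamma\circ\phi$. Moreover, if $C'$ is another ordinary non-singular plane quartic with $\phi(C')=C_{Q'}$ for some $Q'\in\mathcal{Q}$, then $$\mathrm{Isom}_k(C,C')=\phi^{-1}\circ\{\rho\in\Gamma_\gamma:\rho(Q)=Q'\}\circ\phi.$$ In particular $\mathrm{Aut}_k(C)=\phi^{-1}\circ\Gamma_\gamma(Q)\circ\phi$.
   Context: $k=\mathbb{F}_q$, $q$ a power of 2, $\sigma(a)=a^q$ the Frobenius acting coefficientwise. Isomorphisms between non-singular plane quartics are induced by unique elements of $\mathrm{PGL}_3(\overline{k})$; $\mathrm{Isom}_k(C,C')$ (resp. $\mathrm{Aut}_k(C)$) denotes those induced by elements of $\mathrm{PGL}_3(k)$. For a subset $\mathcal{B}$ of lines, $\mathrm{Aut}_k(\mathcal{B})=\{\rho\in\mathrm{PGL}_3(k):\rho(\mathcal{B})=\mathcal{B}\}$. For $\gamma\in\mathrm{PGL}_3(\overline{k})$ with rows $\ell_1,\ell_2,\ell_3$, $F^\gamma=F(\ell_1,\ell_2,\ell_3)$. $\mathcal{Q}$ is the set of quadratic forms $Q=ax^2+by^2+cz^2+dxy+eyz+fzx$ over $\overline{k}$ with $abc\ne0$,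 $a+b+d\ne0$, $b+c+e\ne0$, $a+c+f\ne0$, $a+b+c+d+e+f\ne1$; $C_Q:Q^2=xyz(x+y+z)$. $\Gamma=\mathrm{PGL}_3(\mathbb{F}_2)$; $H_\gamma$ defined by $\ell_1\ell_2\ell_3(\ell_1+\ell_2+\ell_3)=xyz(x+y+z)+H_\gamma^2$; $\gamma(Q)=Q^{\gamma^{-1}}+H_{\gamma^{-1}}$, so $\gamma(C_Q)=C_{\gamma(Q)}$. $\mathcal{D}_\gamma=\{Q\in\mathcal{Q}:\gamma(Q)=\sigma Q\}$. $\Gamma_\gamma$ is the centralizer of $\gamma$ in $\Gamma$ and $\Gamma_\gamma(Q)$ the stabilizer of $Q$ in $\Gamma_\gamma$. Ordinary means Jacobian of 2-rank 3. *)

(* Defs.v *)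
From HB Require Import structures.
From mathcomp Require Import all_boot all_order all_algebra.
From mathcomp Require Import mpoly.
Set Implicit Arguments. Unset Strict Implicit. Unset Printing Implicit Defensive.
Import Order.TTheory GRing.Theory.
Local Open Scope ring_scope.

Section Quartics.
Variable K : fieldType.

Definition form3 := {mpoly K[3]}.
Definition i0 : 'I_3 := @Ordinal 3 0 isT.
Definition i1 : 'I_3 := @Ordinal 3 1 isT.
Definition i2 : 'I_3 := @Ordinal 3 2 isT.
Definition vx : form3 := 'X_i0.
Definition vy : form3 := 'X_i1.
Definition vz : form3 := 'X_i2.

Definition homogeneous (d : nat) (p : form3) : bool := p \is ishomog1 d mdeg.

Definition frob (q : nat) (a : K) : K := a ^+ q.
Definition frob_mx (q : nat) (g : 'M[K]_3) : 'M[K]_3 := map_mx (frob q) g.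
Definition frob_form (q : nat) (F : form3) : form3 := map_mpoly (frob q) F.

(* F^g = F(l1,l2,l3), l_i the i-th row of g viewed as a linear form3 *)
Definition row_form (g : 'M[K]_3) (i : 'I_3) : form3 := \sum_(j < 3) g i j *: 'X_j.
Definition fsubst (F : form3) (g : 'M[K]_3) : form3 :=
  F \mPo [tuple row_form g i | i < 3].

(* points of P^2 are nonzero column vectors; F evaluated at P *)
Definition fev (F : form3) (P : 'cV[K]_3) : K := F.@[fun i => P i 0].

Definition nonsingular (F : form3) : Prop :=
  forall P : 'cV[K]_3, fev F P = 0 -> (forall i, fev (mderiv i F) P = 0) -> P = 0.
Definition plane_quartic (F : form3) : Prop := homogeneous 4 F /\ F != 0.
Definition nonsingular_plane_quartic (F : form3) : Prop :=
  plane_quartic F /\ nonsingular F.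

(* Hasse--Witt (Cartier--Manin) matrix of a plane quartic in characteristic 2:
   entry (i,j) = coefficient in F^(p-1) = F of x^(2 u_j - u_i), u_i = (1,1,1)+e_i. *)
Definition hw_mono (i j : 'I_3) : 'X_{1..3} :=
  [multinom (1 + 2 * (k == j) - (k == i))%N | k < 3].
Definition hasse_witt (F : form3) : 'M[K]_3 := \matrix_(i, j) F@_(hw_mono i j).
(* ordinary: Jacobian of 2-rank 3 (= genus), i.e. invertible Hasse--Witt matrix *)
Definition ordinary (F : form3) : Prop := \det (hasse_witt F) != 0.

Definition form_over_k (q : nat) (F : form3) : Prop :=
  forall m, frob q F@_m = F@_m.

(* PGL_3 : invertible matrices up to nonzero scalars *)
Definition pgl_eq (g h : 'M[K]_3) : Prop := exists c : K, c != 0 /\ g = c *: h.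
Definition pgl_over_k (q : nat) (g : 'M[K]_3) : Prop :=
  g \in unitmx /\ exists c : K, c != 0 /\ frob_mx q (c *: g) = c *: g.

(* g maps the curve F = 0 onto the curve F' = 0: P |-> g P; equivalently
   the equation of g(C) is F^(g^-1), which must be proportional to F'. *)
Definition maps_curve (g : 'M[K]_3) (F F' : form3) : Prop :=
  g \in unitmx /\ exists c : K, c != 0 /\ fsubst F (invmx g) = c *: F'.

Definition isom_k (q : nat) (F F' : form3) (g : 'M[K]_3) : Prop :=
  pgl_over_k q g /\ maps_curve g F F'.

(* lines are nonzero row vectors l (the line l P = 0); a line l is a bitangent
   of F if the restriction of F to l is the square of a binary form3, i.e. all
   intersection multiplicities of l with F are even. *)
Definition restrict (F : form3) (P0 P1 : 'cV[K]_3) : {mpoly K[2]} :=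
  F \mPo [tuple (P0 i 0 *: 'X_(@Ordinal 2 0 isT) + P1 i 0 *: 'X_(@Ordinal 2 1 isT)) | i < 3].
Definition bitangent (F : form3) (l : 'rV[K]_3) : Prop :=
  l != 0 /\ exists P0 P1 : 'cV[K]_3,
    [/\ l *m P0 = 0, l *m P1 = 0, \rank (row_mx P0 P1) = 2 &
        exists G : {mpoly K[2]}, restrict F P0 P1 = G ^+ 2].

(* rho(B) = B for the set B of bitangents; rho maps the line l to l rho^-1 *)
Definition preserves_bitangents (F : form3) (g : 'M[K]_3) : Prop :=
  forall l : 'rV[K]_3, bitangent F l <-> bitangent F (l *m invmx g).

Definition aut_k_bitangents (q : nat) (F : form3) (g : 'M[K]_3) : Prop :=
  pgl_over_k q g /\ preserves_bitangents F g.

Definition Tform : form3 := vx * vy * vz * (vx + vy + vz).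
Definition CQ (Q : form3) : form3 := Q ^+ 2 - Tform.

Definition mono2 (a b c : nat) : 'X_{1..3} :=
  [multinom (if k == i0 then a else if k == i1 then b else c) | k < 3].
Definition inQset (Q : form3) : Prop :=
  let a := Q@_(mono2 2 0 0) in let b := Q@_(mono2 0 2 0) in
  let c := Q@_(mono2 0 0 2) in let d := Q@_(mono2 1 1 0) in
  let e := Q@_(mono2 0 1 1) in let f := Q@_(mono2 1 0 1) in
  homogeneous 2 Q /\ a * b * c != 0 /\ a + b + d != 0 /\ b + c + e != 0 /\
      a + c + f != 0 /\ a + b + c + d + e + f != 1.

(* Gamma = PGL_3(F_2) = GL_3(F_2), realised as the invertible 0/1 matrices in K *)
Definition inGamma (g : 'M[K]_3) : Prop :=
  g \in unitmx /\ forall i j, g i j = 0 \/ g i j = 1.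
Definition inGamma_c (gam g : 'M[K]_3) : Prop := inGamma g /\ g *m gam = gam *m g.

Definition is_H (g : 'M[K]_3) (H : form3) : Prop := fsubst Tform g = Tform + H ^+ 2.
(* Q' = gamma(Q) := Q^(gamma^-1) + H_(gamma^-1) *)
Definition actQ (g : 'M[K]_3) (Q Q' : form3) : Prop :=
  is_H (invmx g) (Q' - fsubst Q (invmx g)).
End Quartics.
Definition inD (K : fieldType) (q : nat) (gam : 'M[K]_3) (Q : form3 K) : Prop :=
  inQset Q /\ actQ gam Q (frob_form q Q).

(* Main.v *)
Require Import Defs.
From HB Require Import structures.
From mathcomp Require Import all_boot all_order all_algebra.
From mathcomp Require Import mpoly.
From mathcomp Require Import ring.
Import GRing.Theory.
Local Open Scope ring_scope.
Set Implicit Arguments. Unset Strict Implicit. Unset Printing Implicit Defensive.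


Section Basic.
Variable K : fieldType.

Lemma ord3P (i : 'I_3) : i = i0 \/ i = i1 \/ i = i2.
Proof.
case: i => [[|[|[|m]]] Hm]; try by [left; apply/val_inj|right;left;apply/val_inj|right;right;apply/val_inj].
Qed.

Lemma sum3 (R : nmodType) (F : 'I_3 -> R) : \sum_(j < 3) F j = F i0 + F i1 + F i2.
Proof.
rewrite !big_ord_recl big_ord0 addr0 addrA.
by congr (F _ + F _ + F _); apply/val_inj.
Qed.

Lemma comp_comp n k l (p : {mpoly K[n]}) (l1 : n.-tuple {mpoly K[k]})
  (l2 : k.-tuple {mpoly K[l]}) :
  (p \mPo l1) \mPo l2 = p \mPo [tuple (tnth l1 i) \mPo l2 | i < n].
Proof.
rewrite (comp_mpolyEX p l1) (comp_mpolyEX p) raddf_sum /=.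
apply: eq_bigr => m _; rewrite comp_mpolyZ; congr (_ *: _).
rewrite !comp_mpolyX rmorph_prod /=; apply: eq_bigr => i _.
by rewrite rmorphXn /= tnth_map tnth_ord_tuple.
Qed.

Lemma row_form_comp (a b : 'M[K]_3) i :
  row_form a i \mPo [tuple row_form b j | j < 3] = row_form (a *m b) i.
Proof.
rewrite /row_form raddf_sum /=.
under eq_bigr => j _ do rewrite comp_mpolyZ comp_mpolyXU -tnth_nth tnth_map tnth_ord_tuple /row_form scaler_sumr.
rewrite exchange_big /=; apply: eq_bigr => j _.
rewrite mxE scaler_suml; apply: eq_bigr => k _; by rewrite scalerA.
Qed.

Lemma fsubst_comp (F : form3 K) a b : fsubst (fsubst F a) b = fsubst F (a *m b).
Proof.
rewrite /fsubst comp_comp; congr comp_mpoly; apply: eq_from_tnth => i.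
by rewrite !tnth_map !tnth_ord_tuple row_form_comp.
Qed.

Lemma row_form1 i : row_form (1%:M : 'M[K]_3) i = 'X_i.
Proof.
rewrite /row_form (bigD1 i) //= big1 ?addr0 => [|j /negPf ji]; rewrite mxE.
  by rewrite eqxx scale1r.
by rewrite eq_sym ji scale0r.
Qed.

Lemma fsubst1 (F : form3 K) : fsubst F 1%:M = F.
Proof.
rewrite /fsubst -[RHS](comp_mpoly_id F); congr comp_mpoly.
by apply: eq_from_tnth => i; rewrite !tnth_map !tnth_ord_tuple row_form1.
Qed.

Lemma fsubstD (F G : form3 K) g : fsubst (F + G) g = fsubst F g + fsubst G g.
Proof. by rewrite /fsubst raddfD. Qed.
Lemma fsubstB (F G : form3 K) g : fsubst (F - G) g = fsubst F g - fsubst G g.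
Proof. by rewrite /fsubst raddfB. Qed.
Lemma fsubstM (F G : form3 K) g : fsubst (F * G) g = fsubst F g * fsubst G g.
Proof. by rewrite /fsubst rmorphM. Qed.
Lemma fsubstX (F : form3 K) n g : fsubst (F ^+ n) g = fsubst F g ^+ n.
Proof. by rewrite /fsubst rmorphXn. Qed.
Lemma fsubstZ c (F : form3 K) g : fsubst (c *: F) g = c *: fsubst F g.
Proof. by rewrite /fsubst comp_mpolyZ. Qed.

Lemma row_formZ1 c i : row_form (c *: 1%:M : 'M[K]_3) i = c *: 'X_i.
Proof.
rewrite -row_form1 /row_form scaler_sumr; apply: eq_bigr => j _.
by rewrite [in LHS]mxE scalerA.
Qed.

Lemma fsubst_homog d (F : form3 K) c : homogeneous d F ->
  fsubst F (c *: 1%:M) = c ^+ d *: F.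
Proof.
move=> hF; rewrite /fsubst comp_mpolyEX [in RHS](mpolyE F) scaler_sumr.
rewrite !big_seq; apply: eq_bigr => m mF.
rewrite comp_mpolyX scalerA mulrC -scalerA; congr (_ *: _).
have -> : \prod_(i < 3) tnth [tuple row_form (c *: 1%:M) i | i < 3] i ^+ m i
   = \prod_(i < 3) (c ^+ m i *: 'X_i ^+ m i).
  by apply: eq_bigr => i _; rewrite tnth_map tnth_ord_tuple row_formZ1 exprZn.
rewrite scaler_prod mpolyXE_id; congr (_ *: _).
have := dhomogP _ _ _ hF m mF => /= <-; rewrite mdegE.
by rewrite -prodrXr.
Qed.

Lemma invmxM3 (A B : 'M[K]_3) : A \in unitmx -> B \in unitmx ->
  invmx (A *m B) = invmx B *m invmx A.
Proof.
move=> Au Bu.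
have H : invmx B *m invmx A *m (A *m B) = 1%:M.
  by rewrite mulmxA (mulmxKV Au) mulVmx.
by rewrite -[LHS]mul1mx -H -mulmxA mulmxV ?mulmx1 // unitmx_mul Au Bu.
Qed.

End Basic.


Section Restr.
Variable K : fieldType.
Definition j0 : 'I_2 := @Ordinal 2 0 isT.
Definition j1 : 'I_2 := @Ordinal 2 1 isT.
Definition Lf (A B : 'cV[K]_3) (i : 'I_3) : {mpoly K[2]} :=
  A i 0 *: 'X_j0 + B i 0 *: 'X_j1.

Lemma restrictE (F : form3 K) A B : restrict F A B = F \mPo [tuple Lf A B i | i < 3].
Proof. by []. Qed.

Lemma restrict_fsubst (F : form3 K) g A B :
  restrict (fsubst F g) A B = restrict F (g *m A) (g *m B).
Proof.
rewrite !restrictE /fsubst comp_comp; congr comp_mpoly; apply: eq_from_tnth => i.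
rewrite !tnth_map !tnth_ord_tuple /row_form raddf_sum /= /Lf !mxE.
under eq_bigr => j _ do rewrite comp_mpolyZ comp_mpolyXU -tnth_nth tnth_map tnth_ord_tuple /Lf scalerDr !scalerA.
by rewrite big_split /= -!scaler_suml.
Qed.

Lemma restrictZ c (F : form3 K) A B : restrict (c *: F) A B = c *: restrict F A B.
Proof. by rewrite !restrictE comp_mpolyZ. Qed.
Lemma restrictB (F G : form3 K) A B : restrict (F - G) A B = restrict F A B - restrict G A B.
Proof. by rewrite !restrictE raddfB. Qed.
Lemma restrictX (F : form3 K) n A B : restrict (F ^+ n) A B = restrict F A B ^+ n.
Proof. by rewrite !restrictE rmorphXn. Qed.

Lemma restrictT A B : restrict (Tform K) A B =
  Lf A B i0 * Lf A B i1 * Lf A B i2 * (Lf A B i0 + Lf A B i1 + Lf A B i2).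
Proof.
rewrite restrictE /Tform /vx /vy /vz !rmorphM !rmorphD /= !comp_mpolyXU.
by rewrite -!tnth_nth !tnth_map !tnth_ord_tuple.
Qed.

Lemma dXU (i j : 'I_2) : ('X_i : {mpoly K[2]})^`M(j) = (i == j)%:R.
Proof.
rewrite mderivX mnm1E; case: eqP => [->|_]; last by rewrite scale0r.
have -> : (U_(j) - U_(j) = 0)%MM by apply/mnmP => k; rewrite !mnmE subnn.
by rewrite scale1r mpolyX0.
Qed.

Definition Eg (a0 a1 a2 r0 r1 r2 : K) :=
  a0*r1*r2*(r0+r1+r2) + a1*r0*r2*(r0+r1+r2) + a2*r0*r1*(r0+r1+r2) + (a0+a1+a2)*r0*r1*r2.

Lemma evL A B i (v : 'I_2 -> K) : (Lf A B i).@[v] = A i 0 * v j0 + B i 0 * v j1.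
Proof. by rewrite /Lf mevalD !mevalZ !mevalXU. Qed.

Lemma dT0 A B (v : 'I_2 -> K) :
  ((restrict (Tform K) A B)^`M(j0)).@[v] =
  Eg (A i0 0) (A i1 0) (A i2 0)
     (A i0 0 * v j0 + B i0 0 * v j1) (A i1 0 * v j0 + B i1 0 * v j1)
     (A i2 0 * v j0 + B i2 0 * v j1).
Proof.
rewrite restrictT !mderivM !mderivD /Lf ?mderivD !mderivZ !dXU /= ?eqxx.
rewrite !(mevalD, mevalM, mevalZ, mevalXU, meval1, meval0) /Eg.
ring.
Qed.

Lemma dT1 A B (v : 'I_2 -> K) :
  ((restrict (Tform K) A B)^`M(j1)).@[v] =
  Eg (B i0 0) (B i1 0) (B i2 0)
     (A i0 0 * v j0 + B i0 0 * v j1) (A i1 0 * v j0 + B i1 0 * v j1)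
     (A i2 0 * v j0 + B i2 0 * v j1).
Proof.
rewrite restrictT !mderivM !mderivD /Lf ?mderivD !mderivZ !dXU /= ?eqxx.
rewrite !(mevalD, mevalM, mevalZ, mevalXU, meval1, meval0) /Eg.
ring.
Qed.

End Restr.


Section Char2.
Variable K : fieldType.
Hypothesis ch2 : (2 \in [pchar K])%N.

Lemma K2 (x : K) : x + x = 0.
Proof. by rewrite -mulr2n -mulr_natl (pcharf0 ch2) mul0r. Qed.
Lemma KN (x : K) : - x = x.
Proof. by apply/eqP; rewrite eq_sym -subr_eq0 opprK K2. Qed.

Lemma mp2 n (p : {mpoly K[n]}) : p + p = 0.
Proof. by rewrite -mulr2n -scaler_nat (pcharf0 ch2) scale0r. Qed.
Lemma mpN n (p : {mpoly K[n]}) : - p = p.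
Proof. by apply/eqP; rewrite eq_sym -subr_eq0 opprK mp2. Qed.
Lemma sqdiff n (a b : {mpoly K[n]}) : a ^+ 2 - b ^+ 2 = (a - b) ^+ 2.
Proof.
have -> : (a - b) ^+ 2 = a ^+ 2 - b ^+ 2 + ((b ^+ 2 + b ^+ 2) - (a * b + a * b)) by ring.
by rewrite !mp2 subrr addr0.
Qed.
Lemma dsq n (G : {mpoly K[n]}) j : (G ^+ 2)^`M(j) = 0.
Proof. by rewrite expr2 mderivM mulrC mp2. Qed.

Hypothesis sqK : forall x : K, exists r, r ^+ 2 = x.

Lemma rank_mul_unit (h : 'M[K]_3) n (M : 'M[K]_(3, n)) : h \in unitmx -> \rank (h *m M) = \rank M.
Proof.
move=> hu; rewrite -mxrank_tr trmx_mul mxrankMfree ?mxrank_tr //.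
by rewrite row_free_unit unitmx_tr.
Qed.

Lemma bit_transport h (F1 F2 : form3 K) l :
  maps_curve h F1 F2 -> bitangent F1 l -> bitangent F2 (l *m invmx h).
Proof.
move=> [hu [c [c0 hc]]] [l0 [P0 [P1 [e0 e1 rk [G hG]]]]].
split.
  apply: contra l0 => /eqP E; apply/eqP.
  by rewrite -[l](mulmxKV hu) E mul0mx.
exists (h *m P0), (h *m P1); split.
- by rewrite mulmxA mulmxKV.
- by rewrite mulmxA mulmxKV.
- by rewrite -mul_mx_row rank_mul_unit.
have [r hr] := sqK c^-1.
exists (r *: G).
have -> : F2 = c^-1 *: fsubst F1 (invmx h) by rewrite hc scalerA mulVf // scale1r.
by rewrite restrictZ restrict_fsubst !mulmxA mulVmx // !mul1mx hG exprZn hr.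
Qed.

Lemma maps_curve_inv h (F1 F2 : form3 K) :
  maps_curve h F1 F2 -> maps_curve (invmx h) F2 F1.
Proof.
move=> [hu [c [c0 hc]]]; split; first by rewrite unitmx_inv.
exists c^-1; split; first by rewrite invr_eq0.
have -> : F2 = c^-1 *: fsubst F1 (invmx h) by rewrite hc scalerA mulVf // scale1r.
by rewrite invmxK fsubstZ fsubst_comp mulVmx // fsubst1.
Qed.

Lemma maps_curve_comp a b (F1 F2 F3 : form3 K) :
  maps_curve a F1 F2 -> maps_curve b F2 F3 -> maps_curve (b *m a) F1 F3.
Proof.
move=> [au [c [c0 hc]]] [bu [d [d0 hd]]]; split; first by rewrite unitmx_mul bu au.
exists (c * d); split; first by rewrite mulf_neq0.
by rewrite invmxM3 // -fsubst_comp hc fsubstZ hd scalerA.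
Qed.

Lemma bit_CQ (Q : form3 K) l : bitangent (CQ Q) l <-> bitangent (Tform K) l.
Proof.
rewrite /bitangent /CQ; split => -[l0 [P0 [P1 [e0 e1 rk [G hG]]]]]; split => //;
  exists P0, P1; split => //.
  exists (restrict Q P0 P1 - G); rewrite -sqdiff -hG restrictB restrictX.
  by rewrite opprB addrC subrK.
exists (restrict Q P0 P1 - G); rewrite -sqdiff -hG restrictB restrictX //.
Qed.

End Char2.


Section Rank.
Variable K : fieldType.

Definition minor (A B : 'cV[K]_3) (i j : 'I_3) := A i 0 * B j 0 - A j 0 * B i 0.

Lemma ord2P (a : 'I_2) : a = j0 \/ a = j1.
Proof. case: a => [[|[|m]] Hm]; [left|right|]; try exact: val_inj. by []. Qed.

Lemma rowmxE2 (A B : 'cV[K]_3) r (a : 'I_2) :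
  row_mx A B r a = if a == j0 then A r 0 else B r 0.
Proof.
rewrite mxE; case: splitP => j hj.
  by rewrite ord1 (_ : a == j0) //; apply/eqP/val_inj => /=; rewrite hj; case: j hj => [[]].
rewrite ord1 (_ : a == j0 = false) //; apply/negbTE; apply/eqP => E.
by move: hj; rewrite E.
Qed.

Lemma sum_delta (f : 'I_3 -> K) i : \sum_r ((r == i)%:R * f r) = f i.
Proof.
rewrite (bigD1 i) //= eqxx mul1r big1 ?addr0 // => j /negPf ->; by rewrite mul0r.
Qed.

Lemma minor_rank (A B : 'cV[K]_3) i j : minor A B i j != 0 -> \rank (row_mx A B) = 2.
Proof.
move=> d0; set d := minor A B i j.
rewrite -mxrank_tr; apply/eqP; rewrite -[X in _ == X]/(1 + 1)%N.
apply/row_freeP.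
pose Bm := \matrix_(r < 3, c < 2) (((r == i)%:R * (if c == j0 then B j 0 else - A j 0)
   + (r == j)%:R * (if c == j0 then - B i 0 else A i 0)) / d).
exists Bm; apply/matrixP => a b; rewrite !mxE.
have hT r : (row_mx A B)^T a r = if a == j0 then A r 0 else B r 0 by rewrite mxE rowmxE2.
have hB r : Bm r b = ((r == i)%:R * (if b == j0 then B j 0 else - A j 0)
   + (r == j)%:R * (if b == j0 then - B i 0 else A i 0)) / d by rewrite mxE.
under eq_bigr => r _ do rewrite hT hB mulrA mulrDr !mulrA ![_ * (_ == _)%:R]mulrC -!mulrA.
rewrite -big_distrl /= big_split /= !sum_delta /=.
case: (ord2P a) => ->; case: (ord2P b) => -> /=; rewrite /d /minor;
  (try by apply/eqP; rewrite mulf_eq0 invr_eq0 (negPf d0) orbF; apply/eqP; ring).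
all: rewrite -[RHS](divff d0) /d /minor; congr (_ / _); ring.
Qed.

Lemma rank_minor (A B : 'cV[K]_3) : \rank (row_mx A B) = 2 ->
  exists i j, minor A B i j != 0.
Proof.
move=> rk.
suff : [exists i, exists j, minor A B i j != 0].
  by case/existsP => i /existsP [j h]; exists i, j.
apply: contraT => /existsPn /= H.
have m0 i j : minor A B i j = 0.
  by have /existsPn /(_ j) := H i; rewrite negbK => /eqP.
suff : (\rank (row_mx A B) <= 1)%N by rewrite rk.
have {rk}: True by [].
move=> _.
case: (eqVneq A 0) => [A0|An0].
  have -> : row_mx A B = B *m row_mx 0 1%:M by rewrite mul_mx_row mulmx0 mulmx1 A0.
  by apply: leq_trans (mxrankM_maxl _ _) (rank_leq_col _).
have /existsP [k Ak] : [exists k, A k 0 != 0].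
  apply: contraNT An0 => /existsPn /= H'; apply/eqP/matrixP => r c.
  by rewrite ord1 mxE; have := H' r; rewrite negbK => /eqP.
have -> : row_mx A B = A *m row_mx 1%:M (B k 0 / A k 0)%:M.
  rewrite mul_mx_row mulmx1 mul_mx_scalar; congr row_mx.
  apply/matrixP => r c; rewrite ord1 mxE.
  have := m0 k r; rewrite /minor => /eqP; rewrite subr_eq0 => /eqP E.
  apply: (mulfI Ak); rewrite E; field; exact: Ak.
by apply: leq_trans (mxrankM_maxl _ _) (rank_leq_col _).
Qed.

End Rank.


Section BitT.
Variable K : fieldType.
Hypothesis ch2 : (2 \in [pchar K])%N.

Definition eqnz (l : 'rV[K]_3) : Prop :=
  l != 0 /\ forall i j, l 0 i != 0 -> l 0 j != 0 -> l 0 i = l 0 j.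

Lemma eqnz_gen (n l : 'I_3 -> K) : (exists k, n k != 0) ->
  (forall i j, n i != 0 -> n j != 0 -> n i = n j) ->
  (forall i j, l i * n j = l j * n i) ->
  forall i j, l i != 0 -> l j != 0 -> l i = l j.
Proof.
move=> [k nk] H1 H2.
suff S i : l i != 0 -> l i = l k by move=> i j /S -> /S ->.
move=> li; have ni : n i != 0.
  apply: contra li => /eqP ni; have := H2 i k; rewrite ni mulr0 => /eqP.
  by rewrite mulf_eq0 (negPf nk) orbF.
by apply: (mulIf nk); rewrite H2 (H1 _ _ ni nk).
Qed.

Definition ncr (A B : 'cV[K]_3) (i : 'I_3) :=
  if i == i0 then minor A B i1 i2 else if i == i1 then minor A B i2 i0 else minor A B i0 i1.

Lemma pq (p q : K) : p * q * (p - q) = 0 -> p != 0 -> q != 0 -> p = q.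
Proof.
move=> /eqP; rewrite !mulf_eq0 => /orP [/orP [-> //|-> //]|]; by rewrite subr_eq0 => /eqP.
Qed.

Definition vf (s t : K) : 'I_2 -> K := fun j => if j == j0 then s else t.

Lemma bitT_eqnz l : bitangent (Tform K) l -> eqnz l.
Proof.
move=> [l0 [A [B [eA eB rk [G hG]]]]]; split => //.
have D0 v : Eg (A i0 0) (A i1 0) (A i2 0)
     (A i0 0 * v j0 + B i0 0 * v j1) (A i1 0 * v j0 + B i1 0 * v j1)
     (A i2 0 * v j0 + B i2 0 * v j1) = 0.
  by rewrite -dT0 hG dsq // meval0.
have D1 v : Eg (B i0 0) (B i1 0) (B i2 0)
     (A i0 0 * v j0 + B i0 0 * v j1) (A i1 0 * v j0 + B i1 0 * v j1)
     (A i2 0 * v j0 + B i2 0 * v j1) = 0.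
  by rewrite -dT1 hG dsq // meval0.
set a0 := A i0 0 in D0 D1; set a1 := A i1 0 in D0 D1; set a2 := A i2 0 in D0 D1.
set b0 := B i0 0 in D0 D1; set b1 := B i1 0 in D0 D1; set b2 := B i2 0 in D0 D1.
have Rz (p q r s : K) : p * r = 0 -> q * r = 0 -> (p = 0 -> q = 0 -> r = 0) -> r = 0.
  move=> h1 h2 h3; case: (eqVneq p 0) => [p0|pn]; last first.
    by apply/eqP; move/eqP: h1; rewrite mulf_eq0 (negPf pn).
  case: (eqVneq q 0) => [q0|qn]; first exact: h3.
  by apply/eqP; move/eqP: h2; rewrite mulf_eq0 (negPf qn).
have W1 : ncr A B i0 * ncr A B i2 * (ncr A B i0 - ncr A B i2) = 0.
  apply: (Rz a1 b1 _ 0).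
  - by rewrite -(D0 (vf b1 (- a1))) /vf /= /ncr /= /minor /Eg -/a0 -/a1 -/a2 -/b0 -/b1 -/b2; ring.
  - by rewrite -(D1 (vf b1 (- a1))) /vf /= /ncr /= /minor /Eg -/a0 -/a1 -/a2 -/b0 -/b1 -/b2; ring.
  by move=> h1 h2; rewrite /ncr /= /minor -/a0 -/a1 -/a2 -/b0 -/b1 -/b2 h1 h2; ring.
have W0 : ncr A B i1 * ncr A B i0 * (ncr A B i1 - ncr A B i0) = 0.
  apply: (Rz a2 b2 _ 0).
  - by rewrite -(D0 (vf b2 (- a2))) /vf /= /ncr /= /minor /Eg -/a0 -/a1 -/a2 -/b0 -/b1 -/b2; ring.
  - by rewrite -(D1 (vf b2 (- a2))) /vf /= /ncr /= /minor /Eg -/a0 -/a1 -/a2 -/b0 -/b1 -/b2; ring.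
  by move=> h1 h2; rewrite /ncr /= /minor -/a0 -/a1 -/a2 -/b0 -/b1 -/b2 h1 h2; ring.
have W2 : ncr A B i2 * ncr A B i1 * (ncr A B i2 - ncr A B i1) = 0.
  apply: (Rz a0 b0 _ 0).
  - by rewrite -(D0 (vf b0 (- a0))) /vf /= /ncr /= /minor /Eg -/a0 -/a1 -/a2 -/b0 -/b1 -/b2; ring.
  - by rewrite -(D1 (vf b0 (- a0))) /vf /= /ncr /= /minor /Eg -/a0 -/a1 -/a2 -/b0 -/b1 -/b2; ring.
  by move=> h1 h2; rewrite /ncr /= /minor -/a0 -/a1 -/a2 -/b0 -/b1 -/b2 h1 h2; ring.
have LA : l 0 i0 * a0 + l 0 i1 * a1 + l 0 i2 * a2 = 0.
  by move/matrixP/(_ 0 0): eA; rewrite !mxE sum3.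
have LB : l 0 i0 * b0 + l 0 i1 * b1 + l 0 i2 * b2 = 0.
  by move/matrixP/(_ 0 0): eB; rewrite !mxE sum3.
have H2 i j : l 0 i * ncr A B j = l 0 j * ncr A B i.
  apply/eqP; rewrite -subr_eq0; apply/eqP.
  case: (ord3P i) => [->|[->|->]]; case: (ord3P j) => [->|[->|->]]; rewrite /ncr /= /minor -/a0 -/a1 -/a2 -/b0 -/b1 -/b2;
  try first [ ring
        | transitivity (a0 * (l 0 i0 * b0 + l 0 i1 * b1 + l 0 i2 * b2) - b0 * (l 0 i0 * a0 + l 0 i1 * a1 + l 0 i2 * a2)); [ring| by rewrite LA LB; ring]
        | transitivity (a1 * (l 0 i0 * b0 + l 0 i1 * b1 + l 0 i2 * b2) - b1 * (l 0 i0 * a0 + l 0 i1 * a1 + l 0 i2 * a2)); [ring| by rewrite LA LB; ring]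
        | transitivity (a2 * (l 0 i0 * b0 + l 0 i1 * b1 + l 0 i2 * b2) - b2 * (l 0 i0 * a0 + l 0 i1 * a1 + l 0 i2 * a2)); [ring| by rewrite LA LB; ring]
        | transitivity (b0 * (l 0 i0 * a0 + l 0 i1 * a1 + l 0 i2 * a2) - a0 * (l 0 i0 * b0 + l 0 i1 * b1 + l 0 i2 * b2)); [ring| by rewrite LA LB; ring]
        | transitivity (b1 * (l 0 i0 * a0 + l 0 i1 * a1 + l 0 i2 * a2) - a1 * (l 0 i0 * b0 + l 0 i1 * b1 + l 0 i2 * b2)); [ring| by rewrite LA LB; ring]
        | transitivity (b2 * (l 0 i0 * a0 + l 0 i1 * a1 + l 0 i2 * a2) - a2 * (l 0 i0 * b0 + l 0 i1 * b1 + l 0 i2 * b2)); [ring| by rewrite LA LB; ring] ].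
have H1 i j : ncr A B i != 0 -> ncr A B j != 0 -> ncr A B i = ncr A B j.
  case: (ord3P i) => [->|[->|->]]; case: (ord3P j) => [->|[->|->]] //;
  move=> h1 h2; first [by apply: (pq W0) | by apply: (pq W1) | by apply: (pq W2)
    | by apply/esym/(pq W0) | by apply/esym/(pq W1) | by apply/esym/(pq W2)].
have H3 : exists k, ncr A B k != 0.
  have [i [j mij]] := rank_minor rk.
  move: mij; case: (ord3P i) => [->|[->|->]]; case: (ord3P j) => [->|[->|->]];
  rewrite /minor -/a0 -/a1 -/a2 -/b0 -/b1 -/b2;
  first [ by rewrite subrr eqxx
        | by move=> h; exists i0; rewrite /ncr /= /minor -/a0 -/a1 -/a2 -/b0 -/b1 -/b2
        | by move=> h; exists i1; rewrite /ncr /= /minor -/a0 -/a1 -/a2 -/b0 -/b1 -/b2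
        | by move=> h; exists i2; rewrite /ncr /= /minor -/a0 -/a1 -/a2 -/b0 -/b1 -/b2
        | by move=> h; exists i0; rewrite /ncr /= /minor -/a0 -/a1 -/a2 -/b0 -/b1 -/b2 -opprB oppr_eq0
        | by move=> h; exists i1; rewrite /ncr /= /minor -/a0 -/a1 -/a2 -/b0 -/b1 -/b2 -opprB oppr_eq0
        | by move=> h; exists i2; rewrite /ncr /= /minor -/a0 -/a1 -/a2 -/b0 -/b1 -/b2 -opprB oppr_eq0 ].
exact: (eqnz_gen H3 H1 H2).
Qed.


End BitT.

Section BitT2.
Variable K : fieldType.
Hypothesis ch2 : (2 \in [pchar K])%N.

Definition mkv (a b c : K) : 'cV[K]_3 :=
  \col_(i < 3) (if i == i0 then a else if i == i1 then b else c).

Lemma bit_of (l : 'rV[K]_3) A B i j G : l != 0 -> l *m A = 0 -> l *m B = 0 ->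
  minor A B i j != 0 -> restrict (Tform K) A B = G ^+ 2 -> bitangent (Tform K) l.
Proof. move=> l0 eA eB m hG; split => //; exists A, B; split => //; [exact: minor_rank m | by exists G]. Qed.

Lemma lmul (l : 'rV[K]_3) a b c :
  l *m mkv a b c = (l 0 i0 * a + l 0 i1 * b + l 0 i2 * c)%:M.
Proof. by apply/matrixP => r s; rewrite !ord1 !mxE sum3 !mxE /= mulr1n. Qed.

Lemma lmul0 (l : 'rV[K]_3) a b c :
  l 0 i0 * a + l 0 i1 * b + l 0 i2 * c = 0 -> l *m mkv a b c = 0.
Proof. by move=> h; rewrite lmul h -scalemx1 scale0r. Qed.

Lemma eqnz_bitT l : eqnz l -> bitangent (Tform K) l.
Proof.
move=> [l0 H].
have K2' := K2 ch2.
have mp2' := @mp2 K ch2 2.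
set p := l 0 i0 in H *; set q := l 0 i1 in H *; set r := l 0 i2 in H *.
set x0 : {mpoly K[2]} := 'X_j0; set x1 : {mpoly K[2]} := 'X_j1.
case: (eqVneq p 0) => [p0|pn].
  case: (eqVneq q 0) => [q0|qn].
    apply: (@bit_of l (mkv 1 0 0) (mkv 0 1 0) i0 i1 0) => //.
    - by apply: lmul0; rewrite -/p -/q -/r p0 q0; ring.
    - by apply: lmul0; rewrite -/p -/q -/r p0 q0; ring.
    - by rewrite /minor !mxE /= mulr1 mul0r subr0 oner_eq0.
    - by rewrite restrictT /Lf !mxE /= !scale0r !scale1r; ring.
  case: (eqVneq r 0) => [r0|rn].
    apply: (@bit_of l (mkv q 0 0) (mkv 0 0 q) i0 i2 0) => //.
    - by apply: lmul0; rewrite -/p -/q -/r p0 r0; ring.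
    - by apply: lmul0; rewrite -/p -/q -/r p0 r0; ring.
    - by rewrite /minor !mxE /= mul0r subr0 mulf_neq0.
    - by rewrite restrictT /Lf !mxE /= !scale0r; ring.
  have qr : q = r := H i1 i2 qn rn.
  apply: (@bit_of l (mkv q 0 0) (mkv 0 q q) i0 i2 ((q *: x0) * (q *: x1))) => //.
  - by apply: lmul0; rewrite -/p -/q -/r p0 -qr; ring.
  - by apply: lmul0; rewrite -/p -/q -/r p0 -qr mul0r add0r K2'.
  - by rewrite /minor !mxE /= mul0r subr0 mulf_neq0.
  - rewrite restrictT /Lf !mxE /= !scale0r !add0r !addr0 -/x0 -/x1 -addrA mp2' addr0; ring.
have Hq : q = 0 \/ q = p.
  by case: (eqVneq q 0) => [|qn]; [left|right; apply/esym/H].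
have Hr : r = 0 \/ r = p.
  by case: (eqVneq r 0) => [|rn]; [left|right; apply/esym/H].
have m0 : minor (mkv q p 0) (mkv r 0 p) i1 i2 != 0.
  by rewrite /minor !mxE /= mul0r subr0 mulf_neq0.
have e1 : l *m mkv q p 0 = 0.
  by apply: lmul0; rewrite -/p -/q -/r mulr0 addr0 mulrC K2'.
have e2 : l *m mkv r 0 p = 0.
  by apply: lmul0; rewrite -/p -/q -/r mulr0 addr0 mulrC K2'.
case: Hq => qv; case: Hr => rv; rewrite ?qv ?rv in m0 e1 e2.
- apply: (@bit_of l _ _ i1 i2 0) m0 _ => //.
  by rewrite restrictT /Lf !mxE /= !scale0r; ring.
- apply: (@bit_of l _ _ i1 i2 ((p *: x0) * (p *: x1))) m0 _ => //.
  rewrite restrictT /Lf !mxE /= !scale0r !add0r !addr0 -/x0 -/x1.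
  rewrite [p *: x1 + _]addrC -addrA mp2' addr0; ring.
- apply: (@bit_of l _ _ i1 i2 ((p *: x0) * (p *: x1))) m0 _ => //.
  rewrite restrictT /Lf !mxE /= !scale0r !add0r !addr0 -/x0 -/x1.
  rewrite mp2' add0r; ring.
- apply: (@bit_of l _ _ i1 i2 0) m0 _ => //.
  rewrite restrictT /Lf !mxE /= !scale0r !add0r !addr0 -/x0 -/x1.
  have -> : p *: x0 + p *: x1 + p *: x0 + p *: x1 = (p *: x0 + p *: x1) + (p *: x0 + p *: x1) by ring.
  rewrite mp2'; ring.
Qed.

End BitT2.


Section F2.
Variable K : fieldType.
Hypothesis ch2 : (2 \in [pchar K])%N.

Definition isb (x : K) := x = 0 \/ x = 1.

Lemma isbD x y : isb x -> isb y -> isb (x + y).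
Proof.
by case=> ->; case=> ->; rewrite ?addr0 ?add0r; [left|right|right|left; exact: K2].
Qed.
Lemma isbM x y : isb x -> isb y -> isb (x * y).
Proof. by case=> ->; case=> ->; rewrite ?mulr0 ?mul0r ?mulr1; [left|left|left|right]. Qed.
Lemma isbN x : isb x -> isb (- x).
Proof. by rewrite KN. Qed.
Lemma isb_sum I (r : seq I) (P : pred I) (F : I -> K) :
  (forall i, P i -> isb (F i)) -> isb (\sum_(i <- r | P i) F i).
Proof. by move=> h; apply: big_ind => //; [left|exact: isbD]. Qed.
Lemma isb_prod I (r : seq I) (P : pred I) (F : I -> K) :
  (forall i, P i -> isb (F i)) -> isb (\prod_(i <- r | P i) F i).
Proof. by move=> h; apply: big_ind => //; [right|exact: isbM]. Qed.
Lemma isb_sign n : isb ((-1) ^+ n).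
Proof. by rewrite (KN ch2) expr1n; right. Qed.

Lemma det01 n (A : 'M[K]_n) : (forall i j, isb (A i j)) -> isb (\det A).
Proof.
move=> h; apply: isb_sum => s _; apply: isbM; first exact: isb_sign.
by apply: isb_prod => i _.
Qed.

Lemma inv01 (A : 'M[K]_3) : inGamma A -> inGamma (invmx A).
Proof.
move=> [Au H]; split; first by rewrite unitmx_inv.
have dA : \det A = 1.
  by case: (det01 H) => // d0; move: Au; rewrite unitmxE unitfE d0 eqxx.
move=> i j; rewrite /invmx Au dA invr1 scale1r /adjugate mxE /cofactor.
apply: isbM; first exact: isb_sign.
by apply: det01 => r s; rewrite !mxE.
Qed.

Lemma mul01 (A B : 'M[K]_3) : (forall i j, isb (A i j)) -> (forall i j, isb (B i j)) ->
  forall i j, isb ((A *m B) i j).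
Proof. by move=> hA hB i j; rewrite mxE; apply: isb_sum => k _; apply: isbM. Qed.

Lemma eqnzE (m : 'rV[K]_3) : eqnz m <->
  m != 0 /\ exists c, c != 0 /\ forall k, m 0 k = 0 \/ m 0 k = c.
Proof.
split.
  move=> [m0 H]; split => //.
  have /existsP [k mk] : [exists k, m 0 k != 0].
    apply: contraNT m0 => /existsPn /= H'; apply/eqP/matrixP => r c.
    by rewrite ord1 mxE; have := H' c; rewrite negbK => /eqP.
  exists (m 0 k); split => // j; case: (eqVneq (m 0 j) 0) => [|mj]; [left|right] => //.
  exact: H.
move=> [m0 [c [c0 H]]]; split => // i j mi mj.
by case: (H i) mi => [->|->]; [rewrite eqxx|]; case: (H j) mj => [->|->]; rewrite ?eqxx.
Qed.

Lemma unit_row0 (u : 'rV[K]_3) (h : 'M[K]_3) : h \in unitmx -> u *m h = 0 -> u = 0.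
Proof. by move=> hu E; rewrite -[u](mulmxK hu) E mul0mx. Qed.

Lemma eqnz_mul01 (m : 'rV[K]_3) A : eqnz m -> inGamma A -> eqnz (m *m A).
Proof.
move=> /eqnzE [m0 [c [c0 H]]] [Au HA]; apply/eqnzE; split.
  by apply: contra m0 => /eqP /(unit_row0 Au) ->.
exists c; split => // j.
have : isb (c^-1 * (m *m A) 0 j).
  rewrite mxE mulr_sumr; apply: isb_sum => k _; rewrite mulrA; apply: isbM => //.
  by case: (H k) => ->; [left; rewrite mulr0|right; rewrite mulVf].
case=> E; [left|right].
  by move/eqP: E; rewrite mulf_eq0 invr_eq0 (negPf c0) => /eqP.
by rewrite -(mulVKf c0 ((m *m A) 0 j)) E mulr1.
Qed.

End F2.


Section T4.
Variable K : fieldType.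
Hypothesis ch2 : (2 \in [pchar K])%N.

Lemma pairc (a b : 'I_3 -> K) c d : c != 0 -> d != 0 ->
  (forall k, a k = 0 \/ a k = c) -> (forall k, b k = 0 \/ b k = d) ->
  (exists k, a k = c) -> (exists k, b k = d) ->
  (forall i j, a i + b i != 0 -> a j + b j != 0 -> a i + b i = a j + b j) ->
  (exists k, (a k == 0) != (b k == 0)) -> c = d.
Proof.
move=> c0 d0 Ha Hb [ja aj] [jb bj] Hs [k hk].
have cd0 : c + d = 0 -> c = d.
  by move/eqP; rewrite addr_eq0 => /eqP ->; rewrite (KN ch2).
have key1 k1 k2 : a k1 = c -> b k1 = 0 -> a k2 = 0 -> b k2 = d -> c = d.
  move=> h1 h2 h3 h4; have := Hs k1 k2; rewrite h1 h2 h3 h4 addr0 add0r.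
  by apply.
have key2 k1 k2 : a k1 = c -> b k1 = 0 -> a k2 = c -> b k2 = d -> c = d.
  move=> h1 h2 h3 h4; case: (eqVneq (c + d) 0) => [/cd0 //|cdn].
  have := Hs k1 k2; rewrite h1 h2 h3 h4 addr0 => /(_ c0 cdn) E.
  by move/eqP: d0; case; rewrite -(addKr c d) -E addNr.
have key3 k1 k2 : a k1 = 0 -> b k1 = d -> a k2 = c -> b k2 = d -> c = d.
  move=> h1 h2 h3 h4; case: (eqVneq (c + d) 0) => [/cd0 //|cdn].
  have := Hs k1 k2; rewrite h1 h2 h3 h4 add0r => /(_ d0 cdn) E.
  by move/eqP: c0; case; rewrite -(addrK d c) -E subrr.
move: hk; case: (Ha k) => ak; case: (Hb k) => bk; rewrite ak bk ?eqxx ?(negPf c0) ?(negPf d0) //= => _.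
  by case: (Hb ja) => bja; [exact: (key1 ja k aj bja ak bk)|exact: (key3 k ja ak bk aj bja)].
by case: (Ha jb) => ajb; [exact: (key1 k jb ak bk ajb bj)|exact: (key2 k jb ak bk ajb bj)].
Qed.

Lemma eqnz_ex (m : 'rV[K]_3) : eqnz m ->
  exists c, [/\ c != 0, forall k, m 0 k = 0 \/ m 0 k = c & exists k, m 0 k = c].
Proof.
move=> [m0 H].
have /existsP [k mk] : [exists k, m 0 k != 0].
  apply: contraNT m0 => /existsPn /= H'; apply/eqP/matrixP => r c.
  by rewrite ord1 mxE; have := H' c; rewrite negbK => /eqP.
exists (m 0 k); split => //; last by exists k.
by move=> j; case: (eqVneq (m 0 j) 0) => [|mj]; [left|right; apply: H].
Qed.

Lemma T4 (h : 'M[K]_3) : h \in unitmx -> (forall m, eqnz m -> eqnz (m *m h)) ->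
  exists d rho, [/\ d != 0, inGamma rho & h = d *: rho].
Proof.
move=> hu Hm.
pose e (i : 'I_3) : 'rV[K]_3 := delta_mx 0 i.
have Ee i k : (e i *m h) 0 k = h i k by rewrite /e /= -rowE mxE.
have eE i k : e i 0 k = (i == k)%:R by rewrite /e mxE eqxx eq_sym.
have ez i : eqnz (e i).
  apply/eqnzE; split.
    by apply/negP => /eqP /matrixP /(_ 0 i); rewrite eE eqxx mxE; move/eqP; rewrite oner_eq0.
  by exists 1; split; [exact: oner_neq0| move=> k; rewrite eE; case: eqP; [right|left]].
have eez i j : i != j -> eqnz (e i + e j).
  move=> ij; apply/eqnzE; split.
    apply/negP => /eqP /matrixP /(_ 0 i); rewrite [(e i + e j) 0 i]mxE !eE eqxx eq_sym (negPf ij) addr0 mxE.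
    by move/eqP; rewrite oner_eq0.
  exists 1; split; first exact: oner_neq0.
  move=> k; rewrite [(e i + e j) 0 k]mxE !eE; case: (eqVneq i k) => [<-|ik]; first by rewrite eq_sym (negPf ij) addr0; right.
  by rewrite add0r; case: eqP; [right|left].
have R i : exists c, [/\ c != 0, forall k, h i k = 0 \/ h i k = c & exists k, h i k = c].
  have [c [c0 H1 [k H2]]] := eqnz_ex (Hm _ (ez i)).
  by exists c; split => // [k'|]; [rewrite -Ee; apply: H1|exists k; rewrite -Ee].
have Sz i j : i != j -> forall a b, h i a + h j a != 0 -> h i b + h j b != 0 ->
    h i a + h j a = h i b + h j b.
  move=> ij a b; have [_ H] := Hm _ (eez i j ij).
  have Eij c : ((e i + e j) *m h) 0 c = h i c + h j c by rewrite mulmxDl mxE !Ee.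
  by rewrite -!Eij; apply: H.
have Ind i j : i != j -> exists k, (h i k == 0) != (h j k == 0).
  move=> ij; have [ci [ci0 Hi _]] := R i; have [cj [cj0 Hj _]] := R j.
  suff /existsP [k hk] : [exists k, (h i k == 0) != (h j k == 0)] by exists k.
  apply: contraT => /existsPn H.
  have u0 : (cj *: e i - ci *: e j) *m h = 0.
    apply/matrixP => r k; rewrite ord1 mulmxBl -!scalemxAl /e /= -!rowE !mxE.
    have := H k; rewrite negbK => /eqP.
    by case: (Hi k) => ->; case: (Hj k) => ->; rewrite ?eqxx ?(negPf ci0) ?(negPf cj0) //=;
      rewrite ?mulr0 ?subrr // mulrC subrr.
  move/matrixP: (unit_row0 hu u0) => /(_ 0 i); rewrite /e /= !mxE !eqxx (negPf ij) /=.
  by rewrite mulr1 mulr0 subr0 => /eqP; rewrite (negPf cj0).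
have [c0 [c00 H0 E0]] := R i0; have [c1 [c10 H1 E1]] := R i1; have [c2 [c20 H2 E2]] := R i2.
have e01 : c0 = c1.
  by apply: (pairc (a := fun k => h i0 k) (b := fun k => h i1 k)) => //; [apply: Sz|apply: Ind].
have e02 : c0 = c2.
  by apply: (pairc (a := fun k => h i0 k) (b := fun k => h i2 k)) => //; [apply: Sz|apply: Ind].
have Hr i k : h i k = 0 \/ h i k = c0.
  by case: (ord3P i) => [->|[->|->]]; [apply: H0|rewrite e01; apply: H1|rewrite e02; apply: H2].
exists c0, (c0^-1 *: h); split => //.
  split; first by rewrite unitmxZ // unitfE invr_eq0.
  by move=> i k; rewrite mxE; case: (Hr i k) => ->; [left; rewrite mulr0|right; rewrite mulVf].
by rewrite scalerA mulfV // scale1r.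
Qed.


End T4.


Section Frob.
Variable K : fieldType.
Hypothesis ch2 : (2 \in [pchar K])%N.
Variable e : nat.
Let q := (2 ^ e)%N.

Lemma q_nat : [pchar K].-nat q.
Proof. by rewrite /q pnatX (pnatE _ (isT : prime 2)) ch2. Qed.
Lemma q_gt0 : (0 < q)%N.
Proof. by rewrite /q expn_gt0. Qed.

Lemma frobD (x y : K) : frob q (x + y) = frob q x + frob q y.
Proof. by rewrite /frob exprDn_pchar // q_nat. Qed.
Lemma frobM (x y : K) : frob q (x * y) = frob q x * frob q y.
Proof. by rewrite /frob exprMn. Qed.
Lemma frob0 : frob q (0 : K) = 0.
Proof. by rewrite /frob expr0n; case: q q_gt0. Qed.
Lemma frob1 : frob q (1 : K) = 1.
Proof. by rewrite /frob expr1n. Qed.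
Lemma frob_sum I (r : seq I) (P : pred I) (F : I -> K) :
  frob q (\sum_(i <- r | P i) F i) = \sum_(i <- r | P i) frob q (F i).
Proof. exact: (big_morph _ frobD frob0). Qed.
Lemma frob_neq0 (x : K) : x != 0 -> frob q x != 0.
Proof. by move=> x0; rewrite /frob expf_neq0. Qed.

Lemma frob_mxM (A B : 'M[K]_3) : frob_mx q (A *m B) = frob_mx q A *m frob_mx q B.
Proof.
apply/matrixP => i j; rewrite !mxE frob_sum; apply: eq_bigr => k _.
by rewrite frobM !mxE.
Qed.
Lemma frob_mxZ c (A : 'M[K]_3) : frob_mx q (c *: A) = frob q c *: frob_mx q A.
Proof. by apply/matrixP => i j; rewrite !mxE frobM. Qed.
Lemma frob_mx1 : frob_mx q (1%:M : 'M[K]_3) = 1%:M.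
Proof. by apply/matrixP => i j; rewrite !mxE; case: (i == j); rewrite /= ?frob1 ?frob0. Qed.
Lemma frob_mx01 (A : 'M[K]_3) : (forall i j, isb (A i j)) -> frob_mx q A = A.
Proof. by move=> h; apply/matrixP => i j; rewrite !mxE; case: (h i j) => ->; rewrite ?frob0 ?frob1. Qed.
Lemma frob_inv (A : 'M[K]_3) : A \in unitmx -> frob_mx q (invmx A) = invmx (frob_mx q A).
Proof.
move=> Au.
have H : frob_mx q (invmx A) *m frob_mx q A = 1%:M by rewrite -frob_mxM mulVmx // frob_mx1.
have [_ Fu] := mulmx1_unit H.
by rewrite -[LHS]mulmx1 -(mulmxV Fu) mulmxA H mul1mx.
Qed.

End Frob.


Section FrobConj.
Variable K : fieldType.
Hypothesis ch2 : (2 \in [pchar K])%N.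
Variable e : nat.
Local Notation q := (2 ^ e)%N.
Variables (phi gam : 'M[K]_3) (a : K).
Hypotheses (phiu : phi \in unitmx) (gamG : inGamma gam) (a0 : a != 0)
  (Ephi : frob_mx q phi *m invmx phi = a *: gam).

Lemma gamu : gam \in unitmx. Proof. by case: gamG. Qed.

Lemma frob_conj X : frob_mx q (invmx phi *m X *m phi) =
  invmx phi *m (invmx gam *m frob_mx q X *m gam) *m phi.
Proof.
have Fp : frob_mx q phi = a *: (gam *m phi) by rewrite -[LHS](mulmxKV phiu) Ephi scalemxAl.
have gu := gamu.
rewrite !(frob_mxM ch2) (frob_inv ch2) // Fp invmxZ; last by rewrite unitmxZ ?unitfE // unitmx_mul gu phiu.
rewrite invmxM3 // -!scalemxAl -scalemxAr scalerA mulVf // scale1r.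
by rewrite !mulmxA.
Qed.

Lemma conjK s Y : phi *m (s *: (invmx phi *m Y *m phi)) *m invmx phi = s *: Y.
Proof.
rewrite -scalemxAr -scalemxAl; congr (_ *: _).
by rewrite !mulmxA (mulmxV phiu) mul1mx (mulmxK phiu).
Qed.

Lemma Frob_over rho c : inGamma rho -> rho *m gam = gam *m rho -> c != 0 ->
  pgl_over_k q (c *: (invmx phi *m rho *m phi)).
Proof.
move=> [ru r01] cm c0; split.
  by rewrite unitmxZ ?unitfE // !unitmx_mul unitmx_inv phiu ru.
exists c^-1; split; first by rewrite invr_eq0.
rewrite scalerA mulVf // scale1r frob_conj frob_mx01 //.
by rewrite -(mulmxA (invmx gam)) cm (mulmxA (invmx gam)) mulVmx ?mul1mx // gamu.
Qed.

Lemma entry_cancel (X Y : 'M[K]_3) s t : (forall i j, isb (X i j)) ->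
  (forall i j, isb (Y i j)) -> Y \in unitmx -> t != 0 -> s *: X = t *: Y -> X = Y.
Proof.
move=> hX hY Yu t0 E.
have /existsP [i /existsP [j Yij]] : [exists i, exists j, Y i j != 0].
  apply: contraT => /existsPn H.
  have Y0 : Y = 0.
    apply/matrixP => i j; rewrite mxE; have := H i; move/existsPn/(_ j); rewrite negbK.
    by move/eqP.
  by move: Yu; rewrite Y0 unitmxE det0 unitr0.
have Y1 : Y i j = 1 by case: (hY i j) Yij => ->; rewrite ?eqxx.
have := congr1 (fun M : 'M[K]_3 => M i j) E; rewrite !mxE Y1 mulr1 => Eij.
have X1 : X i j = 1.
  case: (hX i j) Eij => // ->; rewrite mulr0 => /esym /eqP; by rewrite (negPf t0).
move: E; rewrite -Eij X1 mulr1 => /scalerI; apply; by rewrite -Eij X1 mulr1 in t0 *.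
Qed.

Lemma Frob_comm rho d : inGamma rho -> d != 0 ->
  pgl_over_k q (d *: (invmx phi *m rho *m phi)) -> rho *m gam = gam *m rho.
Proof.
move=> [ru r01] d0 [_ [c [c0 E]]].
rewrite scalerA frob_mxZ frob_conj frob_mx01 // in E.
have E2 : frob q (c * d) *: (invmx gam *m rho *m gam) = (c * d) *: rho.
  have := congr1 (fun M => phi *m M *m invmx phi) E.
  by rewrite /= !conjK.
have E3 : frob q (c * d) *: (rho *m gam) = (c * d) *: (gam *m rho).
  have := congr1 (fun M => gam *m M) E2.
  by rewrite -!scalemxAr !mulmxA (mulmxV gamu) mul1mx.
apply: (entry_cancel _ _ _ _ E3).
- by apply: (mul01 ch2) => //; case: gamG.
- by apply: (mul01 ch2) => //; case: gamG.
- by rewrite unitmx_mul gamu ru.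
- by rewrite mulf_neq0.
Qed.

End FrobConj.


Section Misc.
Variable K : fieldType.
Hypothesis ch2 : (2 \in [pchar K])%N.
Hypothesis sqK : forall x : K, exists r, r ^+ 2 = x.

Lemma eqnz_scale c (m : 'rV[K]_3) : c != 0 -> eqnz m -> eqnz (c *: m).
Proof.
move=> c0 /eqnzE [m0 [d [d0 H]]]; apply/eqnzE; split.
  by rewrite scaler_eq0 negb_or c0.
exists (c * d); split; first by rewrite mulf_neq0.
by move=> k; rewrite mxE; case: (H k) => ->; [left; rewrite mulr0|right].
Qed.

Lemma BF phi (F : form3 K) Q l : maps_curve phi F (CQ Q) ->
  bitangent F l <-> eqnz (l *m invmx phi).
Proof.
move=> mc; have [phiu _] := mc; split.
  by move=> /(bit_transport sqK mc) /(bit_CQ ch2) /(bitT_eqnz ch2).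
move=> /(eqnz_bitT ch2) /(bit_CQ ch2 Q) /(bit_transport sqK (maps_curve_inv mc)).
by rewrite invmxK mulmxKV.
Qed.

Lemma maps_curve_scale d M c (F1 F2 : form3 K) : homogeneous d F1 -> c != 0 ->
  maps_curve M F1 F2 -> maps_curve (c *: M) F1 F2.
Proof.
move=> hF c0 [Mu [k [k0 E]]]; split; first by rewrite unitmxZ ?unitfE.
exists (c^-1 ^+ d * k); split; first by rewrite mulf_neq0 // expf_neq0 // invr_eq0.
rewrite invmxZ ?unitmxZ ?unitfE // -[invmx M]mul1mx scalemxAl -fsubst_comp.
by rewrite (fsubst_homog _ hF) fsubstZ E scalerA.
Qed.

Lemma fsubstXU (g : 'M[K]_3) i : fsubst 'X_i g = row_form g i.
Proof. by rewrite /fsubst comp_mpolyXU -tnth_nth tnth_map tnth_ord_tuple. Qed.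

Lemma fsubst_T_scale s : fsubst (Tform K) (s *: 1%:M) = s ^+ 4 *: Tform K.
Proof.
rewrite /Tform /vx /vy /vz !fsubstM !fsubstD !fsubstXU !row_formZ1.
rewrite -!mul_mpolyC [(s ^+ 4)%:MP]rmorphXn /=; ring.
Qed.

Lemma fsubst_CQ_scale (Q : form3 K) s : homogeneous 2 Q ->
  fsubst (CQ Q) (s *: 1%:M) = s ^+ 4 *: CQ Q.
Proof.
move=> hQ; rewrite /CQ fsubstB fsubstX (fsubst_homog _ hQ) fsubst_T_scale.
by rewrite scalerBr exprZn -exprM.
Qed.

Lemma maps_curve_act rho (Q Q' : form3 K) : rho \in unitmx -> actQ rho Q Q' ->
  maps_curve rho (CQ Q) (CQ Q').
Proof.
move=> ru hA; split => //; exists 1; split; first exact: oner_neq0.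
rewrite scale1r /CQ fsubstB fsubstX hA.
set A := fsubst Q (invmx rho); set T := Tform K.
have -> : A ^+ 2 - (T + (Q' - A) ^+ 2) = (Q' ^+ 2 - T) - (Q' ^+ 2 + Q' ^+ 2) + (A * Q' + A * Q') by ring.
by rewrite !(mp2 ch2) subr0 addr0.
Qed.

End Misc.


Section ActQ.
Variable K : fieldType.
Hypothesis ch2 : (2 \in [pchar K])%N.

Definition Egf (A B : 'cV[K]_3) :=
  Eg (A i0 0) (A i1 0) (A i2 0) (B i0 0) (B i1 0) (B i2 0).

Lemma actQ_of rho d c (Q Q' : form3 K) (w : K) : inGamma rho -> homogeneous 2 Q ->
  d != 0 -> c != 0 -> fsubst (CQ Q) (invmx (d *: rho)) = c *: CQ Q' ->
  w * (1 + w) != 0 -> actQ rho Q Q'.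
Proof.
move=> rG hQ d0 c0 Hc w0.
have r'G := inv01 ch2 rG.
set r' := invmx rho in r'G *.
have [ru _] := rG.
set mu := c * d ^+ 4.
have mu0 : mu != 0 by rewrite mulf_neq0 // expf_neq0.
have H1 : fsubst (CQ Q) r' = mu *: CQ Q'.
  move: Hc; rewrite invmxZ ?unitmxZ ?unitfE // -[invmx rho]mul1mx scalemxAl -fsubst_comp.
  rewrite fsubst_CQ_scale // fsubstZ -/r' => /(congr1 (fun P => d ^+ 4 *: P)).
  by rewrite !scalerA -exprMn mulfV // expr1n scale1r mulrC.
have Hid u R : Egf (r' *m u) (r' *m R) = mu * Egf u R.
  have := congr1 (fun P => ((restrict P u R)^`M(j0)).@[vf 0 1]) H1.
  rewrite /= restrict_fsubst restrictZ /CQ !restrictB !restrictX.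
  rewrite mderivZ mevalZ !mderivB !dsq // !sub0r !mevalN !dT0 /vf /=.
  rewrite !mulr0 !add0r !mulr1 -/(Egf _ _) -/(Egf u R) => E.
  by apply: oppr_inj; rewrite E mulrN.
have fE x : (pFrobenius_aut ch2) x = x ^+ 2 by [].
have fEg A B : (pFrobenius_aut ch2) (Egf A B) = Egf (map_mx (pFrobenius_aut ch2) A) (map_mx (pFrobenius_aut ch2) B).
  by rewrite /Egf /Eg !mxE !(rmorphD, rmorphM).
have f01 (M : 'M[K]_3) : (forall i j, isb (M i j)) -> map_mx (pFrobenius_aut ch2) M = M.
  by move=> h; apply/matrixP => i j; rewrite mxE; case: (h i j) => ->; rewrite ?rmorph0 ?rmorph1.
pose u : 'cV[K]_3 := mkv 1 0 0; pose R : 'cV[K]_3 := mkv 0 1 w.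
have fu : map_mx (pFrobenius_aut ch2) u = u.
  by apply/matrixP => i j; rewrite !mxE; case: ifP => _; rewrite ?rmorph1 //; case: ifP => _; rewrite rmorph0.
have X0 : Egf u R = w * (1 + w) by rewrite /Egf /Eg !mxE /=; ring.
have r01 : forall i j, isb (r' i j) by case: r'G.
have E1 : r' *m map_mx (pFrobenius_aut ch2) R = map_mx (pFrobenius_aut ch2) (r' *m R).
  by rewrite map_mxM f01.
have E2 : r' *m u = map_mx (pFrobenius_aut ch2) (r' *m u) by rewrite map_mxM f01 // fu.
have := Hid u (map_mx (pFrobenius_aut ch2) R).
rewrite E1 [in X in Egf X _]E2 -fEg Hid rmorphM -[in X in _ = _ * Egf X _]fu -fEg => Ef.
have fX : (pFrobenius_aut ch2) (Egf u R) != 0 by rewrite fE X0 expf_neq0.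
have fmu : (pFrobenius_aut ch2) mu = mu by apply: (mulIf fX).
have mu1 : mu = 1.
  by apply: (mulfI mu0); rewrite mulr1 -expr2 -fE.
rewrite mu1 scale1r /CQ fsubstB fsubstX in H1.
rewrite /actQ /is_H -/r'.
set A := fsubst Q r' in H1 *; set T := Tform K in H1 *; set T' := fsubst (Tform K) r' in H1 *.
have E : T' = A ^+ 2 - (Q' ^+ 2 - T) by rewrite -H1; ring.
rewrite E -(sqdiff ch2).
have -> : A ^+ 2 - (Q' ^+ 2 - T) = T + (Q' ^+ 2 - A ^+ 2) + ((A ^+ 2 + A ^+ 2) - (Q' ^+ 2 + Q' ^+ 2)) by ring.
by rewrite !(mp2 ch2) subr0 addr0.
Qed.

End ActQ.

Unset Implicit Arguments. Set Strict Implicit.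

Theorem lemma1p5 (K : closedFieldType) (e q : nat)
  (he : (0 < e)%N) (hq : q = (2 ^ e)%N)
  (char2 : (2 \in [pchar K])%N)
  (Kalg : forall x : K, exists m : nat, (0 < m)%N /\ x ^+ (2 ^ m) = x)
  (F : form3 K)
  (HF : nonsingular_plane_quartic F) (HFk : form_over_k q F) (HFo : ordinary F)
  (gam : 'M[K]_3) (Hgam : inGamma gam)
  (Q : form3 K) (HQ : inD q gam Q)
  (phi : 'M[K]_3) (Hphi : maps_curve phi F (CQ Q))
  (Hphis : pgl_eq (frob_mx q phi *m invmx phi) gam) :
  (forall g : 'M[K]_3,
     aut_k_bitangents q F g <->
     exists rho, inGamma_c gam rho /\ pgl_eq g (invmx phi *m rho *m phi))
  /\
  (forall (F' Q' : form3 K),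
     nonsingular_plane_quartic F' -> form_over_k q F' -> ordinary F' ->
     inQset Q' -> maps_curve phi F' (CQ Q') ->
     forall g : 'M[K]_3,
       isom_k q F F' g <->
       exists rho, (inGamma_c gam rho /\ actQ rho Q Q') /\
                   pgl_eq g (invmx phi *m rho *m phi))
  /\
  (forall g : 'M[K]_3,
     isom_k q F F g <->
     exists rho, (inGamma_c gam rho /\ actQ rho Q Q) /\
                 pgl_eq g (invmx phi *m rho *m phi)).
Proof.
subst q.
have sqK : forall x : K, exists r, r ^+ 2 = x.
  move=> x; have [m [m0 hm]] := Kalg x; exists (x ^+ (2 ^ m.-1)).
  by rewrite -exprM -expnSr prednK.
have [w w1] : exists w : K, w * (1 + w) != 0.
  have [x hx] := @solve_monicpoly K 2 (fun _ => 1) isT.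
  exists x; move: hx; rewrite !big_ord_recl big_ord0 addr0 !mul1r expr0 expr1 /= => hx.
  by rewrite mulrDr mulr1 -expr2 hx addrC -addrA (K2 char2) addr0 oner_neq0.
have phiu : phi \in unitmx by case: Hphi.
case: Hphis => a [a0 Ea].
have gamu : gam \in unitmx by case: Hgam.
case: HQ => HQs _.
have hQ2 : homogeneous 2 Q by case: HQs.
have hF4 : homogeneous 4 F by case: HF => [[]].
have BFF := fun l => BF char2 sqK l Hphi.
have P2 : forall (F' Q' : form3 K), maps_curve phi F' (CQ Q') ->
     forall g : 'M[K]_3,
       isom_k (2 ^ e) F F' g <->
       exists rho, (inGamma_c gam rho /\ actQ rho Q Q') /\
                   pgl_eq g (invmx phi *m rho *m phi).
  move=> F' Q' Hphi' g; split.
    move=> [gk mc].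
    have mcQ := maps_curve_comp (maps_curve_comp (maps_curve_inv Hphi) mc) Hphi'.
    set h := phi *m (g *m invmx phi) in mcQ.
    have hu : h \in unitmx by case: mcQ.
    have Hm m : eqnz m -> eqnz (m *m h).
      move=> /(eqnz_bitT char2) /(bit_CQ char2 Q') /(bit_transport sqK (maps_curve_inv mcQ)).
      by rewrite invmxK => /(bit_CQ char2) /(bitT_eqnz char2).
    have [d [rho [d0 rG hE]]] := T4 char2 hu Hm.
    have gE : g = d *: (invmx phi *m rho *m phi).
      by rewrite scalemxAl scalemxAr -hE /h !mulmxA mulVmx // mul1mx mulmxKV.
    exists rho; split; last by exists d.
    split; last first.
      case: mcQ => _ [c [c0 Ec]]; rewrite hE in Ec.
      exact: (actQ_of char2 rG hQ2 d0 c0 Ec w1).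
    split => //; apply: (Frob_comm char2 phiu Hgam a0 Ea rG d0).
    by rewrite -gE.
  move=> [rho [[[rG cm] act] [c [c0 gE]]]]; split.
    by rewrite gE; apply: (Frob_over char2 phiu Hgam a0 Ea rG cm c0).
  rewrite gE; apply: (maps_curve_scale hF4 c0).
  have [ru _] := rG.
  have := maps_curve_comp (maps_curve_comp Hphi (maps_curve_act char2 ru act)) (maps_curve_inv Hphi').
  by rewrite !mulmxA.
split; last first.
  split; last by move=> g; apply: P2.
  move=> F' Q' _ _ _ _; exact: P2.
move=> g; split.
  move=> [gk Hpres].
  have gu : g \in unitmx by case: gk.
  set h := phi *m g *m invmx phi.
  have hu : h \in unitmx by rewrite /h !unitmx_mul phiu gu unitmx_inv phiu.
  have Hm m : eqnz m -> eqnz (m *m h).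
    move=> hm.
    have b1 : bitangent F (m *m phi) by apply/BFF; rewrite mulmxK.
    have b2 : bitangent F (m *m phi *m g) by apply/Hpres; rewrite mulmxK.
    by have := (BFF _).1 b2; rewrite /h !mulmxA.
  have [d [rho [d0 rG hE]]] := T4 char2 hu Hm.
  have gE : g = d *: (invmx phi *m rho *m phi).
    by rewrite scalemxAl scalemxAr -hE /h !mulmxA mulVmx // mul1mx mulmxKV.
  exists rho; split; last by exists d.
  split => //; apply: (Frob_comm char2 phiu Hgam a0 Ea rG d0).
  by rewrite -gE.
move=> [rho [[rG cm] [c [c0 gE]]]].
have [ru r01] := rG.
split; first by rewrite gE; apply: (Frob_over char2 phiu Hgam a0 Ea rG cm c0).
move=> l; rewrite !BFF.
have Eg : l *m invmx g *m invmx phi = c^-1 *: (l *m invmx phi *m invmx rho).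
  rewrite gE invmxZ; last by rewrite unitmxZ ?unitfE // !unitmx_mul unitmx_inv phiu ru.
  rewrite !invmxM3 ?unitmx_mul ?unitmx_inv ?phiu ?ru // invmxK.
  by rewrite -scalemxAr -scalemxAl !mulmxA mulmxK.
rewrite Eg; split => H.
  by apply: eqnz_scale; rewrite ?invr_eq0 //; apply: (eqnz_mul01 char2 H (inv01 char2 rG)).
have := eqnz_scale c0 H; rewrite scalerA mulfV // scale1r => /(eqnz_mul01 char2) /(_ rG).
by rewrite mulmxKV.
Qed.
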